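(* Let $P^1,\dots,P^4\in\mathbb{R}^n$ be in general position, let $Q^0$ be the equidistant point from $P^1,\dots,P^4$ with barycentric coordinate $\boldsymbol\lambda^0$, and suppose $\lambda^0_1<0$, $\lambda^0_2,\lambda^0_3,\lambda^0_4\ge0$. Let $Q^1=\pi(Q^0|L(P^2,P^3,P^4))$ with barycentric coordinate $\boldsymbol\lambda^1$ about $P^1,\dots,P^4$, and suppose $\lambda^1_2<0$, $\lambda^1_3\ge0$, $\lambda^1_4\ge0$. Let $Q^2=\pi(Q^1|L(P^3,P^4))$. Then the center of the smallest enclosing circle of $P^1,\dots,P^4$ is $Q^\ast=Q^2$ and its radius is $d^\ast=d(P^3,Q^2)$.
   Context: $d$ is the Euclidean distance. Points are in general position if $P^2-P^1,\dots,P^m-P^1$ are linearly independent. $L(S^1,\dots,S^r)$ is the affine subspace spanned by the points; $\pi(Q'|L)$ is the orthogonal projection onto the affine subspace $L$. The barycentric coordinate of $Q\in L(P^1,\dots,P^m)$ is the unique $\boldsymbol\lambda$ with $\sum_i\lambda_i=1$, $Q=\sum_i\lambda_iP^i$. The equidistant point is the unique $Q^0\in L(P^1,\dots,P^m)$ with all $d(P^i,Q^0)$ equal. The smallest enclosing circle has center $Q^\ast$ attaining $\min_Q\max_i d(P^i,Q)$ and radius $d^\ast$ equal to this minimum. *)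

(* Defs.v *)
From HB Require Import structures.
From mathcomp Require Import all_boot all_order all_algebra.
From mathcomp Require Import reals.
Set Implicit Arguments. Unset Strict Implicit. Unset Printing Implicit Defensive.
Import Order.TTheory GRing.Theory Num.Theory.
Local Open Scope ring_scope.

Section Defs.
Variables (R : realType) (n : nat).
Implicit Types (P Q X A B C : 'rV[R]_n).

Definition dotv (u v : 'rV[R]_n) : R := (u *m v^T) 0 0.
Definition dist P Q : R := Num.sqrt (dotv (P - Q) (P - Q)).

Definition general_position4 (P1 P2 P3 P4 : 'rV[R]_n) : Prop :=
  free [:: P2 - P1; P3 - P1; P4 - P1].

Definition bary4 (P1 P2 P3 P4 Q : 'rV[R]_n) (l1 l2 l3 l4 : R) : Prop :=
  l1 + l2 + l3 + l4 = 1 /\ Q = l1 *: P1 + l2 *: P2 + l3 *: P3 + l4 *: P4.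

Definition orth_proj3 (A B C Q X : 'rV[R]_n) : Prop :=
  (exists a b c : R, a + b + c = 1 /\ X = a *: A + b *: B + c *: C) /\
  dotv (Q - X) (B - A) = 0 /\ dotv (Q - X) (C - A) = 0.

Definition orth_proj2 (A B Q X : 'rV[R]_n) : Prop :=
  (exists a b : R, a + b = 1 /\ X = a *: A + b *: B) /\
  dotv (Q - X) (B - A) = 0.

Definition maxdist4 (P1 P2 P3 P4 Q : 'rV[R]_n) : R :=
  Num.max (Num.max (dist P1 Q) (dist P2 Q)) (Num.max (dist P3 Q) (dist P4 Q)).

Definition sec_center4 (P1 P2 P3 P4 Q : 'rV[R]_n) : Prop :=
  forall Q' : 'rV[R]_n, maxdist4 P1 P2 P3 P4 Q <= maxdist4 P1 P2 P3 P4 Q'.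

End Defs.

(* Main.v *)
Require Import Defs.
From HB Require Import structures.
From mathcomp Require Import all_boot all_order all_algebra.
From mathcomp Require Import reals ring lra.
Import Order.TTheory GRing.Theory Num.Theory.
Set Implicit Arguments. Unset Strict Implicit.
Local Open Scope ring_scope.

Section H.
Variables (R : realType) (n : nat).
Implicit Types (u v w : 'rV[R]_n).

Lemma dotvE u v : dotv u v = \sum_j u 0 j * v 0 j.
Proof. by rewrite /dotv !mxE; apply: eq_bigr => j _; rewrite mxE. Qed.
Lemma dotvC u v : dotv u v = dotv v u.
Proof. by rewrite !dotvE; apply: eq_bigr => j _; rewrite mulrC. Qed.
Lemma dotvDl u v w : dotv (u + v) w = dotv u w + dotv v w.
Proof. by rewrite !dotvE -big_split; apply: eq_bigr => j _; rewrite mxE mulrDl. Qed.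
Lemma dotvZl a u w : dotv (a *: u) w = a * dotv u w.
Proof. by rewrite !dotvE mulr_sumr; apply: eq_bigr => j _; rewrite mxE mulrA. Qed.
Lemma dotvNl u w : dotv (- u) w = - dotv u w.
Proof. by rewrite -scaleN1r dotvZl mulN1r. Qed.
Lemma dotvBl u v w : dotv (u - v) w = dotv u w - dotv v w.
Proof. by rewrite dotvDl dotvNl. Qed.
Lemma dotvDr u v w : dotv w (u + v) = dotv w u + dotv w v.
Proof. by rewrite dotvC dotvDl !(dotvC w). Qed.
Lemma dotvZr a u w : dotv w (a *: u) = a * dotv w u.
Proof. by rewrite dotvC dotvZl dotvC. Qed.
Lemma dotvBr u v w : dotv w (u - v) = dotv w u - dotv w v.
Proof. by rewrite dotvC dotvBl !(dotvC w). Qed.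
Lemma dotvNr u w : dotv w (- u) = - dotv w u.
Proof. by rewrite dotvC dotvNl dotvC. Qed.
Lemma dotv0l w : dotv 0 w = 0.
Proof. by rewrite -(scale0r 0) dotvZl mul0r. Qed.
Lemma dotv_ge0 u : 0 <= dotv u u.
Proof. by rewrite dotvE; apply: sumr_ge0 => j _; rewrite -expr2 sqr_ge0. Qed.
Lemma dotv_eq0 u : dotv u u = 0 -> u = 0.
Proof.
rewrite dotvE => /psumr_eq0P H; apply/rowP => j; rewrite mxE.
have := H (fun i _ => (eq_ind _ (fun t => 0 <= t) (sqr_ge0 (u 0 i)) _ (expr2 _))) j isT => /eqP; rewrite mulf_eq0 orbb => /eqP //.
Qed.

Lemma free3 (x y z : 'rV[R]_n) a b c : free [:: x; y; z] ->
  a *: x + b *: y + c *: z = 0 -> [/\ a = 0, b = 0 & c = 0].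
Proof.
move=> /(@freeP _ _ _ (in_tuple [:: x; y; z])) Hf H.
have := Hf (fun i : 'I_3 => nth 0 [:: a; b; c] i).
rewrite !big_ord_recl big_ord0 /= addr0 addrA => /(_ H) K.
by split; [apply: (K ord0) | apply: (K (lift ord0 ord0)) | apply: (K ord_max)].
Qed.

Ltac vec := apply/rowP => j; rewrite !mxE; ring.

Lemma key (O P1 P2 P3 P4 : 'rV[R]_n) l1 l2 l3 l4 :
  l1 + l2 + l3 + l4 = 1 -> O = l1 *: P1 + l2 *: P2 + l3 *: P3 + l4 *: P4 ->
  dotv (P1 - O) (P1 - O) = dotv (P4 - O) (P4 - O) ->
  dotv (P2 - O) (P2 - O) = dotv (P4 - O) (P4 - O) ->
  dotv (P3 - O) (P3 - O) = dotv (P4 - O) (P4 - O) ->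
  l1 * dotv (P1 - P3) (P1 - P4) =
  dotv (P3 - O + (P4 - O)) (P3 - O + (P4 - O)) / 2 - l2 * dotv (P2 - P3) (P2 - P4).
Proof.
move=> hs hO e1 e2 e3.
have hsum : l1 *: (P1 - O) + l2 *: (P2 - O) + l3 *: (P3 - O) + l4 *: (P4 - O) = 0.
  apply/rowP => j; move/rowP: hO => /(_ j); rewrite !mxE => hj.
  have -> : l4 = 1 - l1 - l2 - l3 by lra.
  rewrite hj; have -> : l4 = 1 - l1 - l2 - l3 by lra. ring.
have E3 := congr1 (fun v => dotv v (P3 - O)) hsum.
have E4 := congr1 (fun v => dotv v (P4 - O)) hsum.
rewrite /= !dotvDl !dotvZl !dotv0l in E3 E4.
have -> : P1 - P3 = (P1 - O) - (P3 - O) by vec.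
have -> : P1 - P4 = (P1 - O) - (P4 - O) by vec.
have -> : P2 - P3 = (P2 - O) - (P3 - O) by vec.
have -> : P2 - P4 = (P2 - O) - (P4 - O) by vec.
move: e1 e2 e3 E3 E4; clear hO hsum.
move: (P1 - O) (P2 - O) (P3 - O) (P4 - O) => u1 u2 u3 u4 e1 e2 e3 E3 E4.
rewrite !dotvBl !dotvBr !dotvDl !dotvDr.
have hl1 : l1 = 1 - l2 - l3 - l4 by lra.
rewrite hl1 in E3 E4 *.
rewrite ?e1 ?e2 ?e3 in E3 E4 *.
rewrite ?(dotvC u3 u1) ?(dotvC u4 u3) ?(dotvC u3 u2) ?(dotvC u4 u1) ?(dotvC u4 u2) ?(dotvC u2 u1) in E3 E4 *.
lra.
Qed.

Lemma sqd (P Q P' Q' : 'rV[R]_n) : dist P Q = dist P' Q' ->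
  dotv (P - Q) (P - Q) = dotv (P' - Q') (P' - Q').
Proof. by move/eqP; rewrite /dist eqr_sqrt ?dotv_ge0 // => /eqP. Qed.

Lemma orth_eq (p w y z : 'rV[R]_n) al be :
  dotv w y = 0 -> dotv w z = 0 -> p = al *: y + be *: z ->
  dotv (p - w) (p - w) = dotv p p + dotv w w.
Proof.
move=> hy hz hp.
have hpw : dotv p w = 0.
  by rewrite hp dotvDl !dotvZl (dotvC y) (dotvC z) hy hz !mulr0 addr0.
rewrite !dotvBl !dotvBr hpw (dotvC w p) hpw; lra.
Qed.
End H.

Theorem theorem8 (R : realType) (n : nat)
  (P1 P2 P3 P4 Q0 Q1 Q2 : 'rV[R]_n)
  (l01 l02 l03 l04 l11 l12 l13 l14 : R) :
  general_position4 P1 P2 P3 P4 ->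
  bary4 P1 P2 P3 P4 Q0 l01 l02 l03 l04 ->
  dist P1 Q0 = dist P2 Q0 -> dist P1 Q0 = dist P3 Q0 -> dist P1 Q0 = dist P4 Q0 ->
  l01 < 0 -> 0 <= l02 -> 0 <= l03 -> 0 <= l04 ->
  orth_proj3 P2 P3 P4 Q0 Q1 ->
  bary4 P1 P2 P3 P4 Q1 l11 l12 l13 l14 ->
  l12 < 0 -> 0 <= l13 -> 0 <= l14 ->
  orth_proj2 P3 P4 Q1 Q2 ->
  sec_center4 P1 P2 P3 P4 Q2 /\
  (forall Q : 'rV[R]_n, sec_center4 P1 P2 P3 P4 Q -> Q = Q2) /\
  maxdist4 P1 P2 P3 P4 Q2 = dist P3 Q2.
Proof.
move=> gp [hs0 hQ0] d12 d13 d14 l01n l02p _ _ [[a [b [c [habc hQ1]]]] [o3 o4]]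
  [hs1 hQ1b] l12n _ _ [[a' [b' [hab' hQ2]]] o2].
move: (sqd d12) (sqd d13) (sqd d14) => g12 g13 g14.
have ha : a = l12.
  have hz : (l12 - a) *: (P2 - P1) + (l13 - b) *: (P3 - P1) + (l14 - c) *: (P4 - P1) = 0.
    apply/rowP => j; move/rowP: hQ1 => /(_ j); move/rowP: hQ1b => /(_ j).
    rewrite !mxE => h1 h2.
    have hl11 : l11 = 1 - l12 - l13 - l14 by lra.
    have hc : c = 1 - a - b by lra.
    rewrite hl11 hc in h1 h2 *. lra.
  by case: (free3 gp hz) => h _ _; lra.
have d34 : 0 < dotv (P3 - P4) (P3 - P4).
  rewrite lt_def dotv_ge0 andbT; apply/eqP => /dotv_eq0 h0.
  have hz : 0 *: (P2 - P1) + 1 *: (P3 - P1) + (-1) *: (P4 - P1) = 0.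
    by rewrite -h0; apply/rowP => j; rewrite !mxE; ring.
  by case: (free3 gp hz) => _ h _; move: h; apply/eqP; rewrite oner_eq0.
have ea : a = 1 - b - c by lra.
have eQ1 : forall j, Q1 0 j = (1 - b - c) * P2 0 j + b * P3 0 j + c * P4 0 j.
  by move=> j; move/rowP: hQ1 => /(_ j); rewrite !mxE ea.
have f2 : dotv (P2 - Q0) (P2 - Q0) = dotv (P2 - Q1) (P2 - Q1) + dotv (Q0 - Q1) (Q0 - Q1).
  rewrite -(orth_eq o3 o4 (_ : P2 - Q1 = (-b) *: (P3 - P2) + (-c) *: (P4 - P2))).
    by congr dotv; apply/rowP => j; rewrite !mxE; ring.
  by apply/rowP => j; rewrite !mxE eQ1; ring.
have f3 : dotv (P3 - Q0) (P3 - Q0) = dotv (P3 - Q1) (P3 - Q1) + dotv (Q0 - Q1) (Q0 - Q1).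
  rewrite -(orth_eq o3 o4 (_ : P3 - Q1 = (1 - b) *: (P3 - P2) + (-c) *: (P4 - P2))).
    by congr dotv; apply/rowP => j; rewrite !mxE; ring.
  by apply/rowP => j; rewrite !mxE eQ1; ring.
have f4 : dotv (P4 - Q0) (P4 - Q0) = dotv (P4 - Q1) (P4 - Q1) + dotv (Q0 - Q1) (Q0 - Q1).
  rewrite -(orth_eq o3 o4 (_ : P4 - Q1 = (-b) *: (P3 - P2) + (1 - c) *: (P4 - P2))).
    by congr dotv; apply/rowP => j; rewrite !mxE; ring.
  by apply/rowP => j; rewrite !mxE eQ1; ring.
have k1 : dotv (P2 - Q1) (P2 - Q1) = dotv (P4 - Q1) (P4 - Q1) by lra.
have k3 : dotv (P3 - Q1) (P3 - Q1) = dotv (P4 - Q1) (P4 - Q1) by lra.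
have T2n : dotv (P2 - P3) (P2 - P4) <= 0.
  have e1 : a + 0 + b + c = 1 by lra.
  have e2 : Q1 = a *: P2 + 0 *: P2 + b *: P3 + c *: P4 by rewrite scale0r addr0.
  have := key e1 e2 k1 k1 k3; rewrite mul0r subr0 => h.
  have := dotv_ge0 (P3 - Q1 + (P4 - Q1)); rewrite ha in h; nra.
have T1n : dotv (P1 - P3) (P1 - P4) <= 0.
  have k1' : dotv (P1 - Q0) (P1 - Q0) = dotv (P4 - Q0) (P4 - Q0) by lra.
  have k2' : dotv (P2 - Q0) (P2 - Q0) = dotv (P4 - Q0) (P4 - Q0) by lra.
  have k3' : dotv (P3 - Q0) (P3 - Q0) = dotv (P4 - Q0) (P4 - Q0) by lra.
  have := key hs0 hQ0 k1' k2' k3' => h.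
  have := dotv_ge0 (P3 - Q0 + (P4 - Q0)); nra.
have eb' : a' = 1 - b' by lra.
have eQ2 : forall j, Q2 0 j = (1 - b') * P3 0 j + b' * P4 0 j.
  by move=> j; move/rowP: hQ2 => /(_ j); rewrite !mxE eb'.
have v3 : P3 - Q2 = (- b') *: (P4 - P3) + 0 *: (P4 - P3).
  by apply/rowP => j; rewrite !mxE eQ2; ring.
have v4 : P4 - Q2 = (1 - b') *: (P4 - P3) + 0 *: (P4 - P3).
  by apply/rowP => j; rewrite !mxE eQ2; ring.
have m3 := orth_eq o2 o2 v3.
have m4 := orth_eq o2 o2 v4.
have e3' : P3 - Q2 - (Q1 - Q2) = P3 - Q1 by apply/rowP => j; rewrite !mxE; ring.
have e4' : P4 - Q2 - (Q1 - Q2) = P4 - Q1 by apply/rowP => j; rewrite !mxE; ring.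
rewrite e3' in m3; rewrite e4' in m4.
have hb : b' = 1 / 2.
  move: m3 m4; rewrite v3 v4 !scale0r !addr0 !dotvZl !dotvZr.
  have -> : dotv (P4 - P3) (P4 - P3) = dotv (P3 - P4) (P3 - P4).
    rewrite !dotvBl !dotvBr (dotvC P3 P4). lra.
  move=> m3 m4.
  have : (1 - 2 * b') * dotv (P3 - P4) (P3 - P4) = 0 by nra.
  move/eqP; rewrite mulf_eq0 (gt_eqF d34) orbF => /eqP; lra.
have hv : P4 - Q2 = - (P3 - Q2).
  apply/rowP => j; rewrite !mxE eQ2 hb; lra.
have in1 : forall X, dotv (X - P3) (X - P4) =
    dotv (X - Q2) (X - Q2) - dotv (P3 - Q2) (P3 - Q2).
  move=> X.
  have -> : X - P3 = (X - Q2) - (P3 - Q2) by apply/rowP => j; rewrite !mxE; ring.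
  have -> : X - P4 = (X - Q2) - (P4 - Q2) by apply/rowP => j; rewrite !mxE; ring.
  rewrite hv; move: (X - Q2) (P3 - Q2) => x v.
  rewrite opprK ?dotvBl ?dotvDr ?dotvBr (dotvC v x); lra.
have sm : forall X, dotv (P3 - X) (P3 - X) + dotv (P4 - X) (P4 - X) =
    2 * dotv (Q2 - X) (Q2 - X) + 2 * dotv (P3 - Q2) (P3 - Q2).
  move=> X.
  have -> : P3 - X = (P3 - Q2) + (Q2 - X) by apply/rowP => j; rewrite !mxE; ring.
  have -> : P4 - X = (P4 - Q2) + (Q2 - X) by apply/rowP => j; rewrite !mxE; ring.
  rewrite hv; move: (Q2 - X) (P3 - Q2) => x v.
  rewrite ?dotvDl ?dotvDr ?dotvNl ?dotvNr (dotvC v x); lra.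
have r4 : dist P4 Q2 = dist P3 Q2.
  by rewrite /dist hv dotvNl dotvC dotvNl opprK.
have r1 : dist P1 Q2 <= dist P3 Q2.
  by rewrite /dist ler_sqrt ?dotv_ge0 //; have := in1 P1; lra.
have r2 : dist P2 Q2 <= dist P3 Q2.
  by rewrite /dist ler_sqrt ?dotv_ge0 //; have := in1 P2; lra.
have mdQ2 : maxdist4 P1 P2 P3 P4 Q2 = dist P3 Q2.
  rewrite /maxdist4; apply/le_anti/andP; split.
    by rewrite !ge_max r1 r2 r4 lexx.
  by rewrite !le_max lexx !orbT.
have low : forall Q, dist P3 Q2 <= maxdist4 P1 P2 P3 P4 Q.
  move=> Q; rewrite /maxdist4.
  have := sm Q; have := dotv_ge0 (Q2 - Q) => h1 h2.
  have [h|h] : dotv (P3 - Q2) (P3 - Q2) <= dotv (P3 - Q) (P3 - Q) \/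
               dotv (P3 - Q2) (P3 - Q2) <= dotv (P4 - Q) (P4 - Q).
    case: (lerP (dotv (P3 - Q2) (P3 - Q2)) (dotv (P3 - Q) (P3 - Q))) => h; [left|right] => //; lra.
    rewrite !le_max.
    have -> : dist P3 Q2 <= dist P3 Q by rewrite /dist ler_sqrt ?dotv_ge0.
    by rewrite !orbT.
  rewrite !le_max.
  have -> : dist P3 Q2 <= dist P4 Q by rewrite /dist ler_sqrt ?dotv_ge0.
  by rewrite !orbT.
split; first by move=> Q; rewrite mdQ2; apply: low.
split=> //.
move=> Q /(_ Q2); rewrite mdQ2 /maxdist4 !ge_max => /andP[/andP[_ _] /andP[h3 h4]].
move: h3 h4; rewrite /dist !ler_sqrt ?dotv_ge0 // => h3 h4.
have := sm Q; have := dotv_ge0 (Q2 - Q) => h1 h2.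
have h0 : dotv (Q2 - Q) (Q2 - Q) = 0 by lra.
by move/dotv_eq0/subr0_eq: h0.
Qed.
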